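(* Let $r,s$ be positive integers, $d=rs$, $\lambda>0$ and $0<\delta\le2/5$. Let $\theta^0\in\mathbb R^d$ be the vector with all entries $1/2$. For $k\in[s]$ let $I_k=\{(k-1)r+1,\dots,kr\}$ and let $\theta^k\in\mathbb R^d$ have entries $\theta^k_i=1/2+\delta$ for $i\in I_k$ and $\theta^k_i=1/2$ otherwise. Let $w$ be drawn uniformly at random from $\{\theta^k\}_{k\in[s]}$. Then \[ \chi^2\big(\mathbb G(w)\,\|\,\mathbb G(\theta^0)\big)\le\frac{2\lambda\delta^2r}{s}\quad\text{provided }\lambda\delta^2r\le2/5, \] and \[ \chi^2\big(\mathbb V(w)\,\|\,\mathbb V(\theta^0)\big)\le\frac{8\lambda\delta^2r}{s}\quad\text{provided }\lambda\delta^2r\le1/10. \]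
   Context: For a vector $U\in\mathbb R^d$, $\mathbb G(U)$ denotes the law of the following observations: counts $\kappa_1,\dots,\kappa_d$ i.i.d. $\mathrm{Poi}(\lambda)$, and, conditionally on them, for each $i$, $\kappa_i$ independent samples from $\mathcal N(U_i,1)$ (all independent). $\mathbb V(U)$ (for $U\in[0,1]^d$) is defined identically with $\mathrm{Ber}(U_i)$ samples in place of $\mathcal N(U_i,1)$. For a random vector $w$, $\mathbb G(w)$ (resp. $\mathbb V(w)$) denotes the mixture obtained by first drawing $w$ and then observations from $\mathbb G(w)$ (resp. $\mathbb V(w)$). $\chi^2$ denotes the chi-square divergence. *)

(* Defs.v *)
From HB Require Import structures.
From mathcomp Require Import all_boot all_order all_algebra.
From mathcomp Require Import all_classical all_reals all_analysis.
Set Implicit Arguments. Unset Strict Implicit. Unset Printing Implicit Defensive.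
Import Order.TTheory GRing.Theory Num.Theory.
Local Open Scope ring_scope.
Local Open Scope ereal_scope.

(* An observation of the Poissonized model in dimension d: for each
   coordinate i, the (finite, random-length) list of samples seen at i.
   The observation space is  prod_i (disjoint union_n X^n).  *)
Definition obs (X : Type) (d : nat) := 'I_d -> seq X.

Section Model.
Variables (R : realType) (X : Type).

(* J is "integration of one sample" w.r.t. the base reference measure on X
   (Lebesgue on R for Gaussian samples, counting measure on bool for
   Bernoulli samples). *)
Variable J : (X -> \bar R) -> \bar R.

Fixpoint intn (n : nat) (g : seq X -> \bar R) : \bar R :=
  match n with
  | 0%N => g [::]
  | n'.+1 => J (fun x => intn n' (fun t => g (x :: t)))
  end.

(* integral over the disjoint union of the X^n (reference measure
   sum_n (base)^n) *)
Definition intseq (g : seq X -> \bar R) : \bar R :=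
  \sum_(n <oo) intn n g.

Fixpoint intobs_aux d (l : seq 'I_d) (g : obs X d -> \bar R) : \bar R :=
  match l with
  | [::] => g (fun _ => [::])
  | i :: l' => intseq (fun t => intobs_aux l'
                 (fun o => g (fun j => if j == i then t else o j)))
  end.

Definition intobs d (g : obs X d -> \bar R) : \bar R :=
  intobs_aux (enum 'I_d) g.

Variable f : R -> X -> R.

(* density of the law (G or V)(U) on obs X d, w.r.t. the reference measure:
   Poisson(lam) weight of each count times the product of sample densities *)
Definition law_dens (lam : R) d (U : 'I_d -> R) (o : obs X d) : R :=
  (\prod_(i < d)
     (expR (- lam) * lam ^+ size (o i) / (size (o i))`!%:R *
      \prod_(x <- o i) f (U i) x))%R.

(* chi-square divergence chi^2(P || Q) = \int p^2/q dmu - 1, for P, Q with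
   densities p, q w.r.t. the reference measure (q > 0 everywhere here) *)
Definition chi2 d (p q : obs X d -> R) : \bar R :=
  intobs (fun o => ((p o ^+ 2) / q o)%:E) - 1.
End Model.

Definition gauss_pdf (R : realType) (m x : R) : R :=
  (expR (- ((x - m) ^+ 2) / 2) / Num.sqrt (2 * pi))%R.
Definition leb_int (R : realType) (g : R -> \bar R) : \bar R :=
  \int[@lebesgue_measure R]_(x in setT) g x.

Definition bern_pmf (R : realType) (p : R) (b : bool) : R :=
  if b then p else (1 - p)%R.
Definition bool_int (R : realType) (g : bool -> \bar R) : \bar R :=
  g false + g true.

Definition G_dens (R : realType) (lam : R) d (U : 'I_d -> R) : obs R d -> R :=
  law_dens (@gauss_pdf R) lam U.
Definition V_dens (R : realType) (lam : R) d (U : 'I_d -> R) : obs bool d -> R :=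
  law_dens (@bern_pmf R) lam U.

(* theta^0 and theta^k (k 0-based; I_k = {k r, ..., k r + r - 1} 0-based) *)
Definition theta0 (R : realType) d : 'I_d -> R := fun _ => (1 / 2)%R.
Definition thetak (R : realType) (r s : nat) (delta : R) (k : 'I_s)
    : 'I_(r * s) -> R :=
  fun i => if (i %/ r == k)%N then (1 / 2 + delta)%R else (1 / 2)%R.

Definition unif_mix (R : realType) (X : Type) (s d : nat)
    (dens : ('I_d -> R) -> obs X d -> R) (th : 'I_s -> 'I_d -> R)
    : obs X d -> R :=
  fun o => (s%:R^-1 * \sum_(k < s) dens (th k) o)%R.

(* Main.v *)
Require Import Defs.
From HB Require Import structures.
From mathcomp Require Import all_boot all_order all_algebra.
From mathcomp Require Import all_classical all_reals all_analysis.
From mathcomp Require Import measurable_realfun normal_distribution.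
From mathcomp.algebra_tactics Require Import ring lra.
Import Order.TTheory GRing.Theory Num.Theory.
Local Open Scope ring_scope.
Section Generic.
Variables (R : realType) (X : Type) (J : (X -> \bar R) -> \bar R).
Variable (I : finType).
Variable good : (X -> R) -> R -> Prop.
Hypothesis good_ge0 : forall phi c, good phi c -> (forall x, 0 <= phi x) /\ 0 <= c.
Hypothesis Jlin : forall (a : I -> R) (phi : I -> X -> R) (c : I -> R),
  (forall j, good (phi j) (c j)) -> (forall j, 0 <= a j) ->
  J (fun x => (\sum_j a j * phi j x)%:E) = (\sum_j a j * c j)%:E.

Lemma intn_prod n (a : I -> nat -> R) phi c :
  (forall j, good (phi j) (c j)) -> (forall j m, 0 <= a j m) ->
  intn J n (fun t => (\sum_j a j (size t) * \prod_(x <- t) phi j x)%:E) =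
  (\sum_j a j n * c j ^+ n)%:E.
Proof.
move=> hg; elim: n a => [|n IH] a ha /=.
  by congr EFin; apply: eq_bigr => j _; rewrite big_nil expr0.
have E x : intn J n (fun t => (\sum_j a j (size (x :: t)) * \prod_(y <- x :: t) phi j y)%:E)
   = (\sum_j (a j n.+1 * c j ^+ n) * phi j x)%:E.
  rewrite (_ : (fun t => _) = (fun t => (\sum_j (a j (size t).+1 * phi j x) * \prod_(y <- t) phi j y)%:E)); last first.
    by apply/funext => t /=; congr EFin; apply: eq_bigr => j _; rewrite big_cons mulrA.
  rewrite (IH (fun j m => a j m.+1 * phi j x)) /=; last by move=> j m; apply: mulr_ge0 => //; case: (good_ge0 _ _ (hg j)).
  by congr EFin; apply: eq_bigr => j _; rewrite mulrAC.
rewrite (_ : (fun x => _) = (fun x => (\sum_j (a j n.+1 * c j ^+ n) * phi j x)%:E)); last first.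
  by apply/funext => x; rewrite E.
rewrite (Jlin _ _ c hg); last first.
  by move=> j; apply: mulr_ge0 => //; apply: exprn_ge0; case: (good_ge0 _ _ (hg j)).
by congr EFin; apply: eq_bigr => j _; rewrite exprSr mulrA.
Qed.

Lemma series_expR (x : R) :
  (\sum_(n <oo) ((x ^+ n / n`!%:R)%:E) = (expR x)%:E)%E.
Proof.
rewrite expRE -EFin_lim; last first.
  rewrite /pseries/=; under eq_fun do rewrite mulrC.
  exact: is_cvg_series_exp_coeff.
apply/congr_lim/funext => n/=; rewrite /pseries/= /series/= -sumEFin//.
by apply: eq_bigr => i _; rewrite mulrC.
Qed.

Lemma intseq_prod (lam : R) (a : I -> R) phi c :
  (forall j, good (phi j) (c j)) -> (forall j, 0 <= a j) -> 0 <= lam ->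
  intseq J (fun t => (\sum_j a j * (expR (- lam) * lam ^+ size t / (size t)`!%:R
                      * \prod_(x <- t) phi j x))%:E)
  = (\sum_j a j * expR (lam * (c j - 1)))%:E.
Proof.
move=> hg ha hl; rewrite /intseq.
have E n : intn J n (fun t => (\sum_j a j * (expR (- lam) * lam ^+ size t / (size t)`!%:R
                      * \prod_(x <- t) phi j x))%:E)
   = (\sum_j ((a j * expR (-lam))%:E * ((lam * c j) ^+ n / n`!%:R)%:E))%E.
  rewrite (_ : (fun t => _) = fun t => (\sum_j (a j * (expR (- lam) * lam ^+ size t / (size t)`!%:R)) * \prod_(x<-t) phi j x)%:E); last first.
    by apply/funext => t; congr EFin; apply: eq_bigr => j _; rewrite mulrA.
  rewrite (intn_prod n (fun j m => a j * (expR (-lam) * lam ^+ m / m`!%:R)) phi c hg); last first.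
    move=> j m; apply: mulr_ge0 => //; apply: mulr_ge0; last by rewrite invr_ge0.
    by apply: mulr_ge0; [exact: expR_ge0 | exact: exprn_ge0].
  rewrite -sumEFin; apply: eq_bigr => j _; rewrite -EFinM exprMn; congr EFin; ring.
rewrite (eq_eseriesr (fun n _ => E n)) nneseries_sum; last first.
  move=> j n _; rewrite -EFinM lee_fin; apply: mulr_ge0.
    by apply: mulr_ge0 => //; exact: expR_ge0.
  apply: mulr_ge0; last by rewrite invr_ge0.
  by apply: exprn_ge0; apply: mulr_ge0 => //; case: (good_ge0 _ _ (hg j)).
rewrite -sumEFin; apply: eq_bigr => j _.
rewrite nneseriesZl; last first.
  move=> n _; rewrite lee_fin; apply: mulr_ge0; last by rewrite invr_ge0.
  by apply: exprn_ge0; apply: mulr_ge0 => //; case: (good_ge0 _ _ (hg j)).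
rewrite series_expR -EFinM -mulrA -expRD; congr (EFin (_ * expR _)); ring.
Qed.

Lemma intobs_prod d (H : I -> 'I_d -> seq X -> R) (S : I -> 'I_d -> R) :
  (forall j i t, 0 <= H j i t) -> (forall j i, 0 <= S j i) ->
  (forall i (a : I -> R), (forall j, 0 <= a j) ->
     intseq J (fun t => (\sum_j a j * H j i t)%:E) = (\sum_j a j * S j i)%:E) ->
  forall l : seq 'I_d, uniq l -> forall b : I -> R, (forall j, 0 <= b j) ->
  intobs_aux J l (fun o => (\sum_j b j * \prod_(i <- l) H j i (o i))%:E)
  = (\sum_j b j * \prod_(i <- l) S j i)%:E.
Proof.
move=> hH hS hint; elim=> [|i l IH] /=.
  by move=> _ b hb; congr EFin; apply: eq_bigr => j _; rewrite !big_nil.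
move=> /andP[il ul] b hb.
have E t : intobs_aux J l (fun o => (\sum_j b j * \prod_(i' <- i :: l)
     H j i' ((fun j0 => if j0 == i then t else o j0) i'))%:E)
   = (\sum_j (b j * \prod_(i' <- l) S j i') * H j i t)%:E.
  rewrite (_ : (fun o => _) = fun o => (\sum_j (b j * H j i t) * \prod_(i' <- l) H j i' (o i'))%:E); last first.
    apply/funext => o; congr EFin; apply: eq_bigr => j _; rewrite big_cons eqxx -mulrA; congr (_ * (_ * _)).
    apply: eq_big_seq => i' i'l /=; case: eqP => // ii'.
    by move: il; rewrite -ii' i'l.
  rewrite IH //; last by move=> j; exact: mulr_ge0.
  by congr EFin; apply: eq_bigr => j _; rewrite mulrAC.
rewrite (_ : (fun t => _) = fun t => (\sum_j (b j * \prod_(i' <- l) S j i') * H j i t)%:E); last first.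
  by apply/funext => t; rewrite E.
rewrite hint; last by move=> j; apply: mulr_ge0 => //; exact: prodr_ge0.
by congr EFin; apply: eq_bigr => j _; rewrite big_cons mulrAC mulrA.
Qed.
End Generic.

Section Model2.
Variables (R : realType) (X : Type) (J : (X -> \bar R) -> \bar R).
Variables (s d : nat).
Local Notation I := ((ordinal s * ordinal s)%type : finType).
Variable good : (X -> R) -> R -> Prop.
Hypothesis good_ge0 : forall phi c, good phi c -> (forall x, 0 <= phi x) /\ 0 <= c.
Hypothesis Jlin : forall (a : I -> R) (phi : I -> X -> R) (c : I -> R),
  (forall j, good (phi j) (c j)) -> (forall j, 0 <= a j) ->
  J (fun x => (\sum_j a j * phi j x)%:E) = (\sum_j a j * c j)%:E.
Variables (f : R -> X -> R) (lam : R) (th : 'I_s -> 'I_d -> R) (cf : R -> R -> R).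
Hypothesis hlam : 0 < lam.
Hypothesis f_ge0 : forall k i x, 0 <= f (th k i) x.
Hypothesis fc_gt0 : forall x, 0 < f (1 / 2) x.
Hypothesis hgood : forall k k' i,
  good (fun x => f (th k i) x * f (th k' i) x / f (1 / 2) x) (cf (th k i) (th k' i)).

Lemma intobs_mix :
  intobs J (fun o => ((unif_mix (@law_dens R X f lam d) th o ^+ 2)
                      / law_dens f lam (@theta0 R d) o)%:E)
  = (\sum_(p : I) s%:R^-2 * \prod_(i < d) expR (lam * (cf (th p.1 i) (th p.2 i) - 1)))%:E.
Proof.
pose w (t : seq X) := expR (- lam) * lam ^+ size t / (size t)`!%:R.
have w_gt0 t : 0 < w t.
  by rewrite /w divr_gt0 ?ltr0n ?fact_gt0 // mulr_gt0 ?expR_gt0 // exprn_gt0.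
pose phi (p : I) (i : 'I_d) x := f (th p.1 i) x * f (th p.2 i) x / f (1 / 2) x.
pose H (p : I) (i : 'I_d) (t : seq X) := w t * \prod_(x <- t) phi p i x.
pose P m (t : seq X) := w t * \prod_(x <- t) f m x.
have HP p i t : H p i t = P (th p.1 i) t * P (th p.2 i) t / P (1/2) t.
  rewrite /H /P /phi big_split prodfV big_split /=.
  have : \prod_(x <- t) f (1 / 2) x != 0 by rewrite gt_eqF // prodr_gt0.
  have := w_gt0 t; rewrite lt0r => /andP[wn0 _] cn0.
  by field; rewrite wn0 cn0.
have pw o : (unif_mix (@law_dens R X f lam d) th o ^+ 2) / law_dens f lam (@theta0 R d) o
   = \sum_(p : I) s%:R^-2 * \prod_(i <- enum 'I_d) H p i (o i).
  have -> : \sum_(p : I) s%:R^-2 * \prod_(i <- enum 'I_d) H p i (o i)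
     = \sum_(p : I) s%:R^-2 * ((\prod_(i < d) P (th p.1 i) (o i)) * (\prod_(i < d) P (th p.2 i) (o i))
        / \prod_(i < d) P (1/2) (o i)).
    apply: eq_bigr => p _; congr (_ * _); rewrite big_enum /=.
    by rewrite -prodfV -!big_split /=; apply: eq_bigr => i _; rewrite HP.
  rewrite -mulr_sumr -mulr_suml -(pair_bigA _ (fun k k' => (\prod_(i < d) P (th k i) (o i)) * (\prod_(i < d) P (th k' i) (o i)))) /=.
  rewrite /unif_mix /law_dens /theta0 /P /w.
  set A := (\sum_(k < s) _).
  have -> : \sum_(k < s) \sum_(k' < s) (\prod_(i < d) (expR (- lam) * lam ^+ size (o i) / (size (o i))`!%:R *
         \prod_(x <- o i) f (th k i) x)) * (\prod_(i < d) (expR (- lam) * lam ^+ size (o i) / (size (o i))`!%:R *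
         \prod_(x <- o i) f (th k' i) x)) = A * A.
    by rewrite /A mulr_suml; apply: eq_bigr => k _; rewrite mulr_sumr.
  by rewrite exprMn exprVn -expr2 mulrA.
rewrite (_ : (fun o => _) = fun o => (\sum_(p : I) s%:R^-2 * \prod_(i <- enum 'I_d) H p i (o i))%:E); last first.
  by apply/funext => o; rewrite pw.
have phi_ge0 p i x : 0 <= phi p i x.
  by rewrite /phi divr_ge0 ?mulr_ge0 // ltW.
rewrite /intobs (@intobs_prod R X J I d H
   (fun p i => expR (lam * (cf (th p.1 i) (th p.2 i) - 1)))) //.
- by congr EFin; apply: eq_bigr => p _; rewrite big_enum.
- by move=> p i t; rewrite /H mulr_ge0 ?(ltW (w_gt0 t)) // prodr_ge0.
- move=> i a ha.
  exact: (@intseq_prod R X J I good good_ge0 Jlin lam a (fun p => phi p i)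
            (fun p => cf (th p.1 i) (th p.2 i)) (fun p => hgood p.1 p.2 i) ha (ltW hlam)).
- exact: enum_uniq.
Qed.
End Model2.
Lemma count_block (R : realType) (r s : nat) (hr : (0 < r)%N) (k : 'I_s) (c : R) :
  \sum_(i < r * s) (if (i %/ r == k)%N then c else 0) = r%:R * c.
Proof.
rewrite -(big_mkord xpredT (fun i => if (i %/ r == k)%N then c else 0)) /=.
rewrite mulnC big_nat_mul.
rewrite (eq_bigr (fun k' : nat => if (k' == val k)%N then c *+ r else 0)); last first.
  move=> k' _.
  rewrite (eq_big_nat _ _ (F2 := fun _ => if (k' == val k)%N then c else 0)); last first.
    move=> j /andP[h1 h2].
    have -> : (j %/ r)%N = k'.
      have -> : j = (k' * r + (j - k' * r))%N by rewrite subnKC.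
      rewrite divnMDl // divn_small ?addn0 //.
      by rewrite ltn_subLR // -mulSnr.
    by [].
  rewrite sumr_const_nat mulSnr addnC addnK.
  by case: ifP => _; rewrite ?mul0rn.
rewrite big_mkord -big_mkcond /= (big_pred1 k) ?mulr_natl //.
Qed.

Lemma mix_value (R : realType) (r s : nat) (hr : (0 < r)%N) (hs : (0 < s)%N)
  (lam delta : R) (Gf : R -> R) (hG0 : Gf 0 = 0) :
  \sum_(p : 'I_s * 'I_s) s%:R^-2 * \prod_(i < r * s)
     expR (lam * Gf ((@thetak R r s delta p.1 i - 1/2) * (@thetak R r s delta p.2 i - 1/2)))
  = 1 + (expR (lam * r%:R * Gf (delta ^+ 2)) - 1) / s%:R.
Proof.
have E (p : 'I_s * 'I_s) : \prod_(i < r * s)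
     expR (lam * Gf ((@thetak R r s delta p.1 i - 1/2) * (@thetak R r s delta p.2 i - 1/2)))
   = 1 + (if p.1 == p.2 then expR (lam * r%:R * Gf (delta^+2)) - 1 else 0).
  rewrite -expR_sum; case: eqP => [e|ne].
    rewrite (eq_bigr (fun i : 'I_(r*s) => if (i %/ r == p.1)%N then lam * Gf (delta^+2) else 0)); last first.
      move=> i _; rewrite /thetak e; case: ifP => _.
        by congr (_ * Gf _); ring.
      by rewrite subrr mul0r hG0 mulr0.
    by rewrite count_block // addrC subrK mulrA [r%:R * _]mulrC.
  rewrite big1 ?expR0 ?addr0 // => i _.
  rewrite /thetak; case: ifP => /eqP h1; case: ifP => /eqP h2.
  - by exfalso; apply: ne; apply: ord_inj; rewrite -h1 -h2.
  - by rewrite subrr mulr0 hG0 mulr0.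
  - by rewrite subrr mul0r hG0 mulr0.
  - by rewrite subrr mul0r hG0 mulr0.
under eq_bigr do rewrite E mulrDr mulr1.
rewrite big_split /= sumr_const card_prod card_ord -mulr_sumr.
rewrite -(pair_bigA _ (fun k k' => if k == k' then expR (lam * r%:R * Gf (delta^+2)) - 1 else 0)) /=.
set v := expR _ - 1.
have inner (k : 'I_s) : \sum_(j < s) (if k == j then v else 0) = v.
  rewrite (bigD1 k) //= eqxx big1 ?addr0 // => j.
  by rewrite eq_sym => /negbTE ->.
under eq_bigr do rewrite inner.
rewrite sumr_const card_ord.
have s0 : s%:R != 0 :> R by rewrite pnatr_eq0 -lt0n.
rewrite -[_ *+ (s * s)]mulr_natr -[v *+ s]mulr_natr natrM.
move: s0; clearbody v; move: (s%:R : R) => x x0.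
by field.
Qed.
Lemma expR_chord (R : realType) (x a : R) : 0 <= x -> x <= a -> 0 < a ->
  expR x <= 1 + x * (expR a - 1) / a.
Proof.
move=> x0 xa a0.
have h0 : 0 <= x / a by rewrite divr_ge0 // ltW.
have h1 : x / a <= 1 by rewrite ler_pdivrMr // mul1r.
have := convex_expR (@Itv01 R (x/a) h0 h1) a 0.
rewrite !convRE /= expR0 mulr0 addr0 divfK ?gt_eqF // mulr1 => h.
apply: (le_trans h); rewrite /unstable.onem le_eqVlt; apply/orP; left; apply/eqP; field; by rewrite gt_eqF.
Qed.

Lemma expR_le_sq (R : realType) (a b : R) : 0 <= a -> 0 < b -> 1 <= (1 - a / 2) * b ->
  expR a <= b ^+ 2.
Proof.
move=> a0 b0 h.
have -> : a = 2%:R * (a / 2) by field.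
rewrite expRM_natl.
have hE : expR (a / 2) <= b.
  have E1 := expR_ge1Dx (- (a / 2)).
  have E2 : expR (a / 2) * expR (- (a / 2)) = 1 by rewrite -expRD subrr expR0.
  have E3 := expR_gt0 (a / 2).
  have E4 := expR_gt0 (- (a / 2)).
  nra.
by rewrite !expr2 ler_pM // ltW // expR_gt0.
Qed.

Lemma gauss_final (R : realType) (lam delta rr : R) : 0 < lam -> 0 < delta -> delta <= 2 / 5 ->
  1 <= rr -> lam * delta ^+ 2 * rr <= 2 / 5 ->
  expR (lam * rr * (expR (delta ^+ 2) - 1)) - 1 <= 2 * lam * delta ^+ 2 * rr.
Proof.
move=> l0 d0 d1 r1 t1.
set u := delta ^+ 2.
have u0 : 0 <= u by rewrite /u exprn_ge0 // ltW.
have u1 : u <= 4 / 25 by rewrite /u expr2; nra.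
have e1 : expR (4 / 25 : R) <= (25 / 23) ^+ 2 by apply: expR_le_sq => //; lra.
have F1 := @expR_chord R _ _ u0 u1 (ltac:(lra) : (0 : R) < 4 / 25).
have G1 : expR u - 1 <= u * (600 / 529).
  have : u * (expR (4 / 25) - 1) / (4 / 25) <= u * (600 / 529).
    rewrite -mulrA ler_wpM2l //.
    rewrite ler_pdivrMr; last by lra.
    by rewrite expr2 in e1; lra.
  lra.
have G0 : 0 <= expR u - 1 by have := expR_ge1Dx u; lra.
set L := lam * rr.
have L0 : 0 <= L by rewrite /L mulr_ge0 // ltW // (lt_le_trans _ r1).
have tL : L * u <= 2 / 5 by rewrite /L /u mulrAC.
set y := L * (expR u - 1).
have y0 : 0 <= y by rewrite /y mulr_ge0.
have yb : y <= L * u * (600 / 529) by rewrite /y -mulrA ler_wpM2l.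
have y1 : y <= 1 / 2 by lra.
have e2 : expR (1 / 2 : R) <= (4 / 3) ^+ 2 by apply: expR_le_sq => //; lra.
have F2 := @expR_chord R _ _ y0 y1 (ltac:(lra) : (0 : R) < 1 / 2).
have G2 : y * (expR (1 / 2) - 1) / (1 / 2) <= y * (14 / 9).
  rewrite -mulrA ler_wpM2l //.
  rewrite ler_pdivrMr; last by lra.
  by rewrite expr2 in e2; lra.
have -> : 2 * lam * u * rr = 2 * (L * u) by rewrite /L; ring.
lra.
Qed.

Lemma bern_final (R : realType) (lam delta rr : R) : 0 < lam -> 0 < delta ->
  1 <= rr -> lam * delta ^+ 2 * rr <= 1 / 10 ->
  expR (lam * rr * (4 * delta ^+ 2)) - 1 <= 8 * lam * delta ^+ 2 * rr.
Proof.
move=> l0 d0 r1 t1.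
set y := lam * rr * (4 * delta ^+ 2).
have -> : 8 * lam * delta ^+ 2 * rr = 2 * y by rewrite /y; ring.
have ye : y = 4 * (lam * delta ^+ 2 * rr) by rewrite /y; ring.
have y0 : 0 <= y.
  by rewrite /y !mulr_ge0 // ?exprn_ge0 // ltW // (lt_le_trans _ r1).
have y1 : y <= 2 / 5 by lra.
have e2 : expR (2 / 5 : R) <= (5 / 4) ^+ 2 by apply: expR_le_sq => //; lra.
have F2 := @expR_chord R _ _ y0 y1 (ltac:(lra) : (0 : R) < 2 / 5).
have G2 : y * (expR (2 / 5) - 1) / (2 / 5) <= y * 2.
  rewrite -mulrA ler_wpM2l //.
  rewrite ler_pdivrMr; last by lra.
  by rewrite expr2 in e2; lra.
lra.
Qed.
Section Gauss.
Variable R : realType.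

Definition ggood (phi : R -> R) (c : R) : Prop :=
  [/\ (forall x, 0 <= phi x), 0 <= c, measurable_fun setT phi &
      leb_int (fun x => (phi x)%:E) = c%:E].

Lemma ggood_ge0 phi c : ggood phi c -> (forall x, 0 <= phi x) /\ 0 <= c.
Proof. by case. Qed.

Lemma gJlin (I : finType) (a : I -> R) (phi : I -> R -> R) (c : I -> R) :
  (forall j, ggood (phi j) (c j)) -> (forall j, 0 <= a j) ->
  leb_int (fun x => (\sum_j a j * phi j x)%:E) = (\sum_j a j * c j)%:E.
Proof.
move=> hg ha; rewrite /leb_int.
under eq_integral do rewrite -sumEFin.
rewrite ge0_integral_sum //; last first.
- by move=> j x _; rewrite lee_fin mulr_ge0 //; case: (hg j).
- move=> j; apply/measurable_EFinP; apply: measurable_funM => //.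
  by case: (hg j).
rewrite -sumEFin; apply: eq_bigr => j _.
under eq_integral do rewrite EFinM.
rewrite ge0_integralZl_EFin //; last first.
- by case: (hg j) => _ _ m _; apply/measurable_EFinP.
- by move=> x _; rewrite lee_fin; case: (hg j).
by case: (hg j) => _ _ _; rewrite /leb_int => ->; rewrite EFinM.
Qed.

Lemma gauss_normal (m x : R) : gauss_pdf m x = normal_pdf m 1 x.
Proof.
rewrite /gauss_pdf /normal_pdf oner_eq0 /normal_peak /normal_fun expr1n mul1r.
rewrite -[pi *+ 2]mulr_natr [pi * _]mulrC; exact: mulrC.
Qed.

Lemma gauss_gt0 (m x : R) : 0 < gauss_pdf m x.
Proof.
rewrite /gauss_pdf divr_gt0 ?expR_gt0 // sqrtr_gt0 mulr_gt0 //; exact: pi_gt0.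
Qed.

Lemma gauss_prod (a b c x : R) :
  gauss_pdf a x * gauss_pdf b x / gauss_pdf c x
  = expR ((a - c) * (b - c)) * gauss_pdf (a + b - c) x.
Proof.
rewrite /gauss_pdf [RHS]mulrA.
have K0 : Num.sqrt (2 * pi) != 0 :> R.
  by rewrite gt_eqF // sqrtr_gt0 mulr_gt0 //; exact: pi_gt0.
have E0 : expR (- ((x - c) ^+ 2) / 2) != 0 by rewrite gt_eqF // expR_gt0.
have -> : expR ((a - c) * (b - c)) * expR (- ((x - (a + b - c)) ^+ 2) / 2)
   = expR (- ((x - a) ^+ 2) / 2) * expR (- ((x - b) ^+ 2) / 2) / expR (- ((x - c) ^+ 2) / 2).
  by rewrite -expRN -!expRD; congr expR; field.
move: K0 E0; move: (Num.sqrt (2 * pi)) => K K0 E0.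
by field; rewrite K0 E0.
Qed.

Lemma gauss_good (a b : R) :
  ggood (fun x => gauss_pdf a x * gauss_pdf b x / gauss_pdf (1 / 2) x)
        (1 + (expR ((a - 1 / 2) * (b - 1 / 2)) - 1)).
Proof.
have E : (fun x => gauss_pdf a x * gauss_pdf b x / gauss_pdf (1 / 2) x)
   = (fun x => expR ((a - 1 / 2) * (b - 1 / 2)) * normal_pdf (a + b - 1 / 2) 1 x).
  by apply/funext => x; rewrite gauss_prod gauss_normal.
rewrite E; split.
- by move=> x; rewrite mulr_ge0 ?expR_ge0 // normal_pdf_ge0.
- by rewrite addrCA subrr addr0 expR_ge0.
- by apply: measurable_funM => //; exact: measurable_normal_pdf.
- rewrite addrCA subrr addr0 /leb_int.
  under eq_integral do rewrite EFinM.
  rewrite ge0_integralZl_EFin ?expR_ge0 //.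
  + by rewrite integral_normal_pdf mule1.
  + by move=> x _; rewrite lee_fin normal_pdf_ge0.
  + by apply/measurable_EFinP; exact: measurable_normal_pdf.
Qed.
End Gauss.

Section Bern.
Variable R : realType.

Definition bgood (phi : bool -> R) (c : R) : Prop :=
  [/\ (forall x, 0 <= phi x), 0 <= c & phi false + phi true = c].

Lemma bgood_ge0 phi c : bgood phi c -> (forall x, 0 <= phi x) /\ 0 <= c.
Proof. by case. Qed.

Lemma bJlin (I : finType) (a : I -> R) (phi : I -> bool -> R) (c : I -> R) :
  (forall j, bgood (phi j) (c j)) -> (forall j, 0 <= a j) ->
  bool_int (fun x => (\sum_j a j * phi j x)%:E) = (\sum_j a j * c j)%:E.
Proof.
move=> hg ha; rewrite /bool_int -EFinD -big_split /=; congr EFin.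
by apply: eq_bigr => j _; rewrite -mulrDr; case: (hg j) => _ _ ->.
Qed.

Lemma bern_good (a b : R) : 0 <= a <= 1 -> 0 <= b <= 1 ->
  bgood (fun x => bern_pmf a x * bern_pmf b x / bern_pmf (1 / 2) x)
        (1 + 4 * ((a - 1 / 2) * (b - 1 / 2))).
Proof.
move=> /andP[a0 a1] /andP[b0 b1]; split.
- case; rewrite /bern_pmf divr_ge0 ?mulr_ge0 //; lra.
- nra.
- by rewrite /bern_pmf; field.
Qed.
End Bern.

Theorem lemma9 (R : realType) (r s : nat) (lam delta : R)
  (hr : (0 < r)%N) (hs : (0 < s)%N) (hlam : 0 < lam)
  (hd0 : 0 < delta) (hd1 : delta <= 2 / 5) :
  (lam * delta ^+ 2 * r%:R <= 2 / 5 ->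
     (chi2 (@leb_int R)
        (unif_mix (@G_dens R lam (r * s)) (@thetak R r s delta))
        (G_dens lam (@theta0 R (r * s)))
      <= (2 * lam * delta ^+ 2 * r%:R / s%:R)%:E)%E) /\
  (lam * delta ^+ 2 * r%:R <= 1 / 10 ->
     (chi2 (@bool_int R)
        (unif_mix (@V_dens R lam (r * s)) (@thetak R r s delta))
        (V_dens lam (@theta0 R (r * s)))
      <= (8 * lam * delta ^+ 2 * r%:R / s%:R)%:E)%E).
Proof.
set th := @thetak R r s delta.
have r1 : 1 <= r%:R :> R by rewrite ler1n.
have s0 : 0 <= s%:R^-1 :> R by rewrite invr_ge0.
have th01 k i : 0 <= th k i <= 1.
  by rewrite /th /thetak; case: ifP => _; apply/andP; split; lra.
split => h.
- have key := @intobs_mix R R (@leb_int R) s (r * s) (@ggood R) (@ggood_ge0 R)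
     (fun a phi c => @gJlin R _ a phi c) (@gauss_pdf R) lam th
     (fun a b => 1 + (expR ((a - 1 / 2) * (b - 1 / 2)) - 1)) hlam
     (fun k i x => ltW (@gauss_gt0 R _ _)) (fun x => @gauss_gt0 R _ _)
     (fun k k' i => @gauss_good R (th k i) (th k' i)).
  have mv := @mix_value R r s hr hs lam delta (fun y => expR y - 1)
     ltac:(by rewrite /= expR0 subrr).
  have key' : intobs (@leb_int R) (fun o => ((unif_mix (@G_dens R lam (r * s)) th o ^+ 2)
      / G_dens lam (@theta0 R (r * s)) o)%:E) = _ := key.
  rewrite /chi2 key'.
  rewrite (_ : (\sum_(p : 'I_s * 'I_s) _) = 1 + (expR (lam * r%:R * (expR (delta ^+ 2) - 1)) - 1) / s%:R); last first.
    rewrite -mv; apply: eq_bigr => p _; congr (_ * _); apply: eq_bigr => i _.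
    by rewrite addrAC subrr add0r.
  rewrite -EFinB lee_fin addrAC subrr add0r ler_wpM2r //.
  exact: gauss_final.
- have bf_ge0 k i x : 0 <= bern_pmf (th k i) x.
    by have /andP[a0 a1] := th01 k i; case: x; rewrite /bern_pmf //; lra.
  have bc_gt0 x : 0 < bern_pmf (1 / 2 : R) x by case: x; rewrite /bern_pmf; lra.
  have key := @intobs_mix R bool (@bool_int R) s (r * s) (@bgood R) (@bgood_ge0 R)
     (fun a phi c => @bJlin R _ a phi c) (@bern_pmf R) lam th
     (fun a b => 1 + 4 * ((a - 1 / 2) * (b - 1 / 2))) hlam
     bf_ge0 bc_gt0
     (fun k k' i => @bern_good R _ _ (th01 k i) (th01 k' i)).
  have mv := @mix_value R r s hr hs lam delta (fun y => 4 * y)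
     ltac:(by rewrite /= mulr0).
  have key' : intobs (@bool_int R) (fun o => ((unif_mix (@V_dens R lam (r * s)) th o ^+ 2)
      / V_dens lam (@theta0 R (r * s)) o)%:E) = _ := key.
  rewrite /chi2 key'.
  rewrite (_ : (\sum_(p : 'I_s * 'I_s) _) = 1 + (expR (lam * r%:R * (4 * delta ^+ 2)) - 1) / s%:R); last first.
    rewrite -mv; apply: eq_bigr => p _; congr (_ * _); apply: eq_bigr => i _.
    by rewrite addrAC subrr add0r.
  rewrite -EFinB lee_fin addrAC subrr add0r ler_wpM2r //.
  exact: bern_final.
Qed.
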